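(* Let $X$ be a second countable locally compact Hausdorff space equipped with a compatible proper metric $d$ (closed balls are compact), fix $o\in X$, and let $B_o(r)$ denote the closed ball of radius $r$ about $o$. Let $\mathcal{U}$ be a nonprincipal ultrafilter over $\mathbb{N}$, let $(f_n)_{n\in\mathbb{N}}$ be a norm-bounded sequence in $C_0(X)$, and let $f_{\mathcal{U}}(x):=\lim_{\mathcal{U}}f_n(x)$ for $x\in X$. The following are equivalent: (1) $(f_n)$ is $\mathcal{U}$-equicontinuous on bounded sets: for every $r,\varepsilon>0$ there is $\delta>0$ such that $\{n\in\mathbb{N}: \forall s,t\in B_o(r),\ d(s,t)<\delta\Rightarrow|f_n(s)-f_n(t)|<\varepsilon\}\in\mathcal{U}$; (2) $(f_n)$ is $\mathcal{U}$-strict convergent to $f_{\mathcal{U}}$: for every $g\in C_0(X)$ and every $\varepsilon>0$, $\{n\in\mathbb{N}:\|f_ng-f_{\mathcal{U}}g\|_\infty<\varepsilon\}\in\mathcal{U}$.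
   Context: $\lim_{\mathcal{U}}$ denotes the limit along the ultrafilter $\mathcal{U}$: $c=\lim_{\mathcal{U}}c_n$ iff for every $\varepsilon>0$, $\{n:|c_n-c|<\varepsilon\}\in\mathcal{U}$; every bounded sequence of complex numbers has a unique $\mathcal{U}$-limit. *)

(* Defs.v *)
From Stdlib Require Import Reals List.
Open Scope R_scope.

Definition Cx := (R * R)%type.
Definition Cmod (z : Cx) : R := sqrt (fst z ^ 2 + snd z ^ 2).
Definition Csub (z w : Cx) : Cx := (fst z - fst w, snd z - snd w).
Definition Cmul (z w : Cx) : Cx :=
  (fst z * fst w - snd z * snd w, fst z * snd w + snd z * fst w).

Record is_metric {X : Type} (d : X -> X -> R) : Prop := {
  met_nonneg : forall x y, 0 <= d x y;
  met_eq0 : forall x y, d x y = 0 <-> x = y;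
  met_sym : forall x y, d x y = d y x;
  met_tri : forall x y z, d x z <= d x y + d y z }.

Definition closed_ball {X : Type} (d : X -> X -> R) (o : X) (r : R) : X -> Prop :=
  fun x => d o x <= r.

Definition is_open {X : Type} (d : X -> X -> R) (A : X -> Prop) : Prop :=
  forall x, A x -> exists e, 0 < e /\ forall y, d x y < e -> A y.

Definition is_compact {X : Type} (d : X -> X -> R) (K : X -> Prop) : Prop :=
  forall (I : Type) (V : I -> X -> Prop),
    (forall i, is_open d (V i)) ->
    (forall x, K x -> exists i, V i x) ->
    exists l : list I, forall x, K x -> exists i, In i l /\ V i x.

Definition proper_metric {X : Type} (d : X -> X -> R) : Prop :=
  forall o r, is_compact d (closed_ball d o r).

Definition continuous_on {X : Type} (d : X -> X -> R) (f : X -> Cx) : Prop :=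
  forall x eps, 0 < eps -> exists delta, 0 < delta /\
    forall y, d x y < delta -> Cmod (Csub (f y) (f x)) < eps.

Definition C0 {X : Type} (d : X -> X -> R) (f : X -> Cx) : Prop :=
  continuous_on d f /\
  forall eps, 0 < eps -> exists K, is_compact d K /\
    forall x, ~ K x -> Cmod (f x) < eps.

Record is_ultrafilter (U : (nat -> Prop) -> Prop) : Prop := {
  uf_full : U (fun _ => True);
  uf_proper : ~ U (fun _ => False);
  uf_mono : forall A B : nat -> Prop, (forall n, A n -> B n) -> U A -> U B;
  uf_inter : forall A B, U A -> U B -> U (fun n => A n /\ B n);
  uf_ultra : forall A, U A \/ U (fun n => ~ A n) }.

Definition nonprincipal (U : (nat -> Prop) -> Prop) : Prop :=
  forall m : nat, ~ U (fun n => n = m).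

Definition is_Ulim (U : (nat -> Prop) -> Prop) (c : nat -> Cx) (l : Cx) : Prop :=
  forall eps, 0 < eps -> U (fun n => Cmod (Csub (c n) l) < eps).

Definition supnorm_lt {X : Type} (h : X -> Cx) (eps : R) : Prop :=
  exists c, c < eps /\ forall x, Cmod (h x) <= c.

(* Main.v *)
Require Import Defs.
From Stdlib Require Import Reals Lra Classical List ZArith.
From Coquelicot Require Complex.
Open Scope R_scope.

Lemma Csub_eq (a b : Cx) : Csub a b = Complex.Cminus a b.
Proof. destruct a, b; unfold Csub, Complex.Cminus, Complex.Cplus, Complex.Copp; simpl; f_equal; ring. Qed.

Lemma Cmod_ge0 z : 0 <= Cmod z.
Proof. exact (Complex.Cmod_ge_0 z). Qed.

Lemma Cmod_tri a b c : Cmod (Csub a c) <= Cmod (Csub a b) + Cmod (Csub b c).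
Proof.
  rewrite !Csub_eq. change Cmod with Complex.Cmod.
  replace (Complex.Cminus a c) with (Complex.Cplus (Complex.Cminus a b) (Complex.Cminus b c)).
  apply Complex.Cmod_triangle.
  destruct a, b, c; unfold Complex.Cminus, Complex.Cplus, Complex.Copp; simpl; f_equal; ring.
Qed.

Lemma Cmod_sym a b : Cmod (Csub a b) = Cmod (Csub b a).
Proof.
  rewrite !Csub_eq. change Cmod with Complex.Cmod.
  replace (Complex.Cminus a b) with (Complex.Copp (Complex.Cminus b a)).
  apply Complex.Cmod_opp.
  destruct a, b; unfold Complex.Cminus, Complex.Cplus, Complex.Copp; simpl; f_equal; ring.
Qed.

Lemma Cmod_mulsub a b g : Cmod (Csub (Cmul a g) (Cmul b g)) = Cmod (Csub a b) * Cmod g.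
Proof.
  rewrite !Csub_eq. change Cmod with Complex.Cmod.
  rewrite <- Complex.Cmod_mult. f_equal.
  destruct a, b, g; unfold Cmul, Complex.Cmult, Complex.Cminus, Complex.Cplus, Complex.Copp; simpl; f_equal; ring.
Qed.

Lemma Cmod_le_sub a b : Cmod a <= Cmod (Csub a b) + Cmod b.
Proof.
  change Cmod with Complex.Cmod. rewrite Csub_eq.
  replace a with (Complex.Cplus (Complex.Cminus a b) b) at 1.
  apply Complex.Cmod_triangle.
  destruct a, b; unfold Complex.Cminus, Complex.Cplus, Complex.Copp; simpl; f_equal; ring.
Qed.

Lemma Cmod_real a : Cmod (a, 0) = Rabs a.
Proof. unfold Cmod; simpl. replace (a * (a * 1) + 0 * (0 * 1)) with (Rsqr a) by (unfold Rsqr; ring). apply sqrt_Rsqr_abs. Qed.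

Lemma Cmod_sub_le a b : Cmod (Csub a b) <= Cmod a + Cmod b.
Proof.
  rewrite Csub_eq. change Cmod with Complex.Cmod. unfold Complex.Cminus.
  rewrite <- (Complex.Cmod_opp b). apply Complex.Cmod_triangle.
Qed.

Lemma U_ex U (HU : is_ultrafilter U) A : U A -> exists n, A n.
Proof.
  intro H. apply NNPP; intro C. apply (uf_proper U HU).
  apply (uf_mono U HU A); [|exact H]. intros n Hn; apply C; eauto.
Qed.

Lemma U_list U (HU : is_ultrafilter U) {I} (l : list I) (P : I -> nat -> Prop) :
  (forall i, In i l -> U (P i)) -> U (fun n => forall i, In i l -> P i n).
Proof.
  induction l as [|a l IH]; intro H.
  - apply (uf_mono U HU (fun _ => True)); [intros n _ i []|apply (uf_full U HU)].
  - apply (uf_mono U HU (fun n => P a n /\ forall i, In i l -> P i n)).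
    + intros n [H1 H2] i [<-|Hi]; auto.
    + apply (uf_inter U HU). apply H; left; auto. apply IH; intros; apply H; right; auto.
Qed.

Lemma list_max {I} (l : list I) (phi : I -> R) : exists B, 0 < B /\ forall i, In i l -> phi i <= B.
Proof.
  induction l as [|a l [B [HB H]]].
  - exists 1; split; [lra| intros i []].
  - exists (Rmax B (phi a)); split. apply Rlt_le_trans with B; auto; apply Rmax_l.
    intros i [<-|Hi]. apply Rmax_r. apply Rle_trans with B; auto; apply Rmax_l.
Qed.

Lemma list_min {I} (l : list I) (phi : I -> R) : exists D, 0 < D /\ forall i, In i l -> 0 < phi i -> D <= phi i.
Proof.
  induction l as [|a l [D [HD H]]].
  - exists 1; split; [lra| intros i []].
  - destruct (Rlt_dec 0 (phi a)) as [Ha|Ha].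
    + exists (Rmin D (phi a)); split. apply Rmin_glb_lt; auto.
      intros i [<-|Hi] Hp. apply Rmin_r. apply Rle_trans with D; auto; apply Rmin_l.
    + exists D; split; auto. intros i [<-|Hi] Hp. lra. auto.
Qed.

Lemma Ulim_bound U (HU : is_ultrafilter U) a b la lb e :
  U (fun n => Cmod (Csub (a n) (b n)) < e) -> is_Ulim U a la -> is_Ulim U b lb ->
  Cmod (Csub la lb) <= e.
Proof.
  intros H Ha Hb. apply Rnot_lt_le; intro C.
  set (eta := (Cmod (Csub la lb) - e) / 3).
  assert (He : 0 < eta) by (unfold eta; lra).
  destruct (U_ex U HU _ (uf_inter U HU _ _ H (uf_inter U HU _ _ (Ha eta He) (Hb eta He))))
    as [n [H1 [H2 H3]]].
  pose proof (Cmod_tri la (a n) lb). pose proof (Cmod_tri (a n) (b n) lb).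
  rewrite Cmod_sym in H2. unfold eta in *. lra.
Qed.

Lemma ball_open {X} (d : X -> X -> R) (Hd : is_metric d) (P : Prop) x rr :
  is_open d (fun y => P /\ d x y < rr).
Proof.
  intros y [HP Hy]. exists (rr - d x y); split; [lra|].
  intros z Hz. split; auto. pose proof (met_tri d Hd x y z). lra.
Qed.

Lemma compact_bounded {X} (d : X -> X -> R) (Hd : is_metric d) o K :
  is_compact d K -> exists r, 0 < r /\ forall x, K x -> closed_ball d o r x.
Proof.
  intro HK.
  destruct (HK nat (fun m y => True /\ d o y < INR m)) as [l Hl].
  - intro; apply ball_open; auto.
  - intros x _. destruct (archimed (d o x)) as [H1 _].
    exists (Z.to_nat (up (d o x))). split; auto.
    rewrite INR_IZR_INZ, Z2Nat.id. lra.
    apply le_IZR. pose proof (met_nonneg d Hd o x). lra.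
  - destruct (list_max l INR) as [B [HB HB2]]. exists B; split; auto.
    intros x Kx. destruct (Hl x Kx) as [i [Hi [_ Hx]]]. unfold closed_ball.
    specialize (HB2 i Hi). lra.
Qed.

Lemma compact_cont_bounded {X} (d : X -> X -> R) (Hd : is_metric d) K h :
  is_compact d K -> continuous_on d h -> exists B, 0 < B /\ forall x, K x -> Cmod (h x) <= B.
Proof.
  intros HK Hh.
  destruct (HK X (fun x y => Cmod (h y) < Cmod (h x) + 1)) as [l Hl].
  - intros x y Hy. destruct (Hh y (Cmod (h x) + 1 - Cmod (h y))) as [de [Hde H]]; [lra|].
    exists de; split; auto. intros z Hz. specialize (H z Hz).
    pose proof (Cmod_le_sub (h z) (h y)). lra.
  - intros x _. exists x. lra.
  - destruct (list_max l (fun x => Cmod (h x) + 1)) as [B [HB HB2]]. exists B; split; auto.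
    intros x Kx. destruct (Hl x Kx) as [i [Hi Hx]]. specialize (HB2 i Hi). simpl in HB2. lra.
Qed.

Lemma unif_cont {X} (d : X -> X -> R) (Hd : is_metric d) K h :
  is_compact d K -> continuous_on d h -> forall e, 0 < e ->
  exists de, 0 < de /\ forall s t, K s -> d s t < de -> Cmod (Csub (h s) (h t)) < e.
Proof.
  intros HK Hh e He.
  destruct (HK (X * R)%type (fun p y => (0 < snd p /\ forall z, d (fst p) z < snd p ->
       Cmod (Csub (h z) (h (fst p))) < e/2) /\ d (fst p) y < snd p / 2)) as [l Hl].
  - intros [x r]; apply ball_open; auto.
  - intros x _. destruct (Hh x (e/2)) as [de [Hde H]]; [lra|].
    exists (x, de); simpl. rewrite (proj2 (met_eq0 d Hd x x) eq_refl). repeat split; auto; lra.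
  - destruct (list_min l (fun p => snd p / 2)) as [D [HD HD2]]. exists D; split; auto.
    intros s t Ks Hst. destruct (Hl s Ks) as [[x r] [Hi [[Hr Hc] Hs]]]. simpl in *.
    specialize (HD2 _ Hi). simpl in HD2. assert (D <= r/2) by (apply HD2; lra).
    pose proof (met_tri d Hd x s t).
    assert (A1 := Hc s ltac:(lra)). assert (A2 := Hc t ltac:(lra)).
    pose proof (Cmod_tri (h s) (h x) (h t)). rewrite (Cmod_sym (h x) (h t)) in H1. lra.
Qed.

Lemma dir12 (X : Type) (d : X -> X -> R) (o : X)
  (Hd : is_metric d) (Hproper : proper_metric d)
  (U : (nat -> Prop) -> Prop) (HU : is_ultrafilter U)
  (f : nat -> X -> Cx) (Hf : forall n, C0 d (f n))
  (Hbdd : exists M, forall n x, Cmod (f n x) <= M)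
  (fU : X -> Cx) (HfU : forall x, is_Ulim U (fun n => f n x) (fU x)) :
  (forall r eps, 0 < r -> 0 < eps -> exists delta, 0 < delta /\
     U (fun n => forall s t, closed_ball d o r s -> closed_ball d o r t ->
          d s t < delta -> Cmod (Csub (f n s) (f n t)) < eps)) ->
  (forall g, C0 d g -> forall eps, 0 < eps ->
     U (fun n => supnorm_lt (fun x => Csub (Cmul (f n x) (g x)) (Cmul (fU x) (g x))) eps)).
Proof.
  intros H1 g [Hgc Hg0] eps Heps.
  destruct Hbdd as [M0 HM0]. set (M := Rabs M0 + 1).
  assert (HM : 0 < M) by (unfold M; pose proof (Rabs_pos M0); lra).
  assert (Hfn : forall n x, Cmod (f n x) <= M).
  { intros n x; specialize (HM0 n x); pose proof (Rle_abs M0); unfold M; lra. }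
  assert (HfUb : forall x, Cmod (fU x) <= M).
  { intro x. apply Rnot_lt_le; intro C.
    destruct (U_ex U HU _ (HfU x (Cmod (fU x) - M) ltac:(lra))) as [n Hn].
    pose proof (Cmod_le_sub (fU x) (f n x)). rewrite Cmod_sym in H. specialize (Hfn n x). lra. }
  destruct (Hg0 1 ltac:(lra)) as [K1 [HK1 HK1']].
  destruct (compact_cont_bounded d Hd K1 g HK1 Hgc) as [G0 [HG0 HG0']].
  set (G := Rmax G0 1).
  assert (HG : 0 < G) by (unfold G; pose proof (Rmax_r G0 1); lra).
  assert (Hgb : forall x, Cmod (g x) <= G).
  { intro x. destruct (classic (K1 x)) as [Kx|Kx].
    specialize (HG0' x Kx). pose proof (Rmax_l G0 1). unfold G; lra.
    specialize (HK1' x Kx). pose proof (Rmax_r G0 1). unfold G; lra. }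
  set (eta := eps / (8 * M)).
  assert (Heta : 0 < eta) by (unfold eta; apply Rdiv_lt_0_compat; lra).
  destruct (Hg0 eta Heta) as [K [HK HK']].
  destruct (compact_bounded d Hd o K HK) as [r [Hr HKr]].
  set (e' := eps / (8 * G)).
  assert (He' : 0 < e') by (unfold e'; apply Rdiv_lt_0_compat; lra).
  destruct (H1 r e' Hr He') as [de [Hde HUe]].
  destruct (Hproper o r X (fun x y => closed_ball d o r x /\ d x y < de)) as [l Hl].
  - intro x; apply ball_open; auto.
  - intros x Hx. exists x. split; auto. rewrite (proj2 (met_eq0 d Hd x x) eq_refl); lra.
  - assert (HUl := U_list U HU l (fun i n => Cmod (Csub (f n i) (fU i)) < e')
       (fun i _ => HfU i e' He')).
    refine (uf_mono U HU _ _ _ (uf_inter U HU _ _ HUe HUl)).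
    intros n [Hn1 Hn2]. exists (3 * eps / 8). split; [lra|].
    intro x. rewrite Cmod_mulsub.
    destruct (classic (K x)) as [Kx|Kx].
    + destruct (Hl x (HKr x Kx)) as [i [Hi [Bi Hix]]].
      assert (A1 := Hn1 x i (HKr x Kx) Bi ltac:(rewrite met_sym by auto; lra)).
      assert (A2 := Hn2 i Hi).
      assert (A3 : Cmod (Csub (fU i) (fU x)) <= e').
      { apply (Ulim_bound U HU (fun n => f n i) (fun n => f n x)); auto.
        refine (uf_mono U HU _ _ _ HUe). intros m Hm.
        apply Hm; auto. }
      pose proof (Cmod_tri (f n x) (f n i) (fU x)).
      pose proof (Cmod_tri (f n i) (fU i) (fU x)).
      assert (Cmod (Csub (f n x) (fU x)) <= 3 * e') by lra.
      apply Rle_trans with (3 * e' * G).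
      apply Rmult_le_compat; auto using Cmod_ge0.
      unfold e'. right. field. lra.
    + specialize (HK' x Kx).
      assert (Cmod (Csub (f n x) (fU x)) <= 2 * M).
      { pose proof (Cmod_sub_le (f n x) (fU x)). specialize (Hfn n x). specialize (HfUb x). lra. }
      apply Rle_trans with (2 * M * eta).
      apply Rmult_le_compat; auto using Cmod_ge0. lra.
      unfold eta. apply Rle_trans with (eps/4). right; field; lra. lra.
Qed.

Lemma clamp_lip a b : Rabs (Rmin 1 (Rmax 0 a) - Rmin 1 (Rmax 0 b)) <= Rabs (a - b).
Proof.
  unfold Rmin, Rmax.
  repeat (destruct (Rle_dec _ _)); unfold Rabs; repeat (destruct (Rcase_abs _)); lra.
Qed.

Lemma dir21 (X : Type) (d : X -> X -> R) (o : X)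
  (Hd : is_metric d) (Hproper : proper_metric d)
  (U : (nat -> Prop) -> Prop) (HU : is_ultrafilter U)
  (f : nat -> X -> Cx) (Hf : forall n, C0 d (f n))
  (fU : X -> Cx) :
  (forall g, C0 d g -> forall eps, 0 < eps ->
     U (fun n => supnorm_lt (fun x => Csub (Cmul (f n x) (g x)) (Cmul (fU x) (g x))) eps)) ->
  (forall r eps, 0 < r -> 0 < eps -> exists delta, 0 < delta /\
     U (fun n => forall s t, closed_ball d o r s -> closed_ball d o r t ->
          d s t < delta -> Cmod (Csub (f n s) (f n t)) < eps)).
Proof.
  intros H2 r eps Hr Heps.
  set (g := fun x => (Rmin 1 (Rmax 0 (r + 1 - d o x)), 0)).
  assert (Hg : C0 d g).
  { split.
    - intros x e He. exists e; split; auto. intros y Hy.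
      unfold g, Csub; simpl. replace (0 - 0) with 0 by ring. rewrite Cmod_real.
      eapply Rle_lt_trans. apply clamp_lip.
      pose proof (met_tri d Hd o x y). pose proof (met_tri d Hd o y x).
      rewrite (met_sym d Hd y x) in H0.
      unfold Rabs; destruct (Rcase_abs _); lra.
    - intros e He. exists (closed_ball d o (r+1)). split; [apply Hproper|].
      intros x Hx. unfold closed_ball in Hx. unfold g. rewrite Cmod_real.
      unfold Rmin, Rmax. repeat (destruct (Rle_dec _ _)); unfold Rabs;
        repeat (destruct (Rcase_abs _)); lra. }
  assert (Hg1 : forall x, closed_ball d o r x -> g x = (1, 0)).
  { intros x Hx. unfold closed_ball in Hx. unfold g. f_equal.
    unfold Rmin, Rmax. repeat (destruct (Rle_dec _ _)); lra. }
  assert (Hc : forall a b, Cmod (Csub (Cmul a (1,0)) (Cmul b (1,0))) = Cmod (Csub a b)).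
  { intros a b. rewrite Cmod_mulsub, Cmod_real, Rabs_R1. ring. }
  assert (HA := H2 g Hg (eps / 8) ltac:(lra)).
  destruct (U_ex U HU _ HA) as [n0 [c0 [Hc0 Hn0]]].
  destruct (unif_cont d Hd (closed_ball d o r) (f n0) (Hproper o r) (proj1 (Hf n0)) (eps/2))
    as [de [Hde Hu]]; [lra|].
  exists de; split; auto.
  refine (uf_mono U HU _ _ _ HA). intros n [c [Hc1 Hn]] s t Hs Ht Hst.
  assert (E : forall m cc x, closed_ball d o r x ->
     (forall x, Cmod (Csub (Cmul (f m x) (g x)) (Cmul (fU x) (g x))) <= cc) ->
     Cmod (Csub (f m x) (fU x)) <= cc).
  { intros m cc x Hx Hm. specialize (Hm x). rewrite Hg1, Hc in Hm; auto. }
  pose proof (E n c s Hs Hn). pose proof (E n c t Ht Hn).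
  pose proof (E n0 c0 s Hs Hn0). pose proof (E n0 c0 t Ht Hn0).
  pose proof (Hu s t Hs Hst).
  pose proof (Cmod_tri (f n s) (fU s) (f n t)).
  pose proof (Cmod_tri (fU s) (f n0 s) (f n t)).
  pose proof (Cmod_tri (f n0 s) (f n0 t) (f n t)).
  pose proof (Cmod_tri (f n0 t) (fU t) (f n t)).
  rewrite (Cmod_sym (fU s) (f n0 s)) in *.
  rewrite (Cmod_sym (fU t) (f n t)) in *.
  lra.
Qed.

Theorem proposition3p2 (X : Type) (d : X -> X -> R) (o : X)
  (Hd : is_metric d) (Hproper : proper_metric d)
  (U : (nat -> Prop) -> Prop) (HU : is_ultrafilter U) (HUnp : nonprincipal U)
  (f : nat -> X -> Cx) (Hf : forall n, C0 d (f n))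
  (Hbdd : exists M, forall n x, Cmod (f n x) <= M)
  (fU : X -> Cx) (HfU : forall x, is_Ulim U (fun n => f n x) (fU x)) :
  (forall r eps, 0 < r -> 0 < eps -> exists delta, 0 < delta /\
     U (fun n => forall s t, closed_ball d o r s -> closed_ball d o r t ->
          d s t < delta -> Cmod (Csub (f n s) (f n t)) < eps))
  <->
  (forall g, C0 d g -> forall eps, 0 < eps ->
     U (fun n => supnorm_lt (fun x => Csub (Cmul (f n x) (g x)) (Cmul (fU x) (g x))) eps)).
Proof.
  split.
  - apply (dir12 X d o Hd Hproper U HU f Hf Hbdd fU HfU).
  - apply (dir21 X d o Hd Hproper U HU f Hf fU).
Qed.
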